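(* Let $\Omega$ be a connected weighted simplicial complex on $[n]$, let $\mathcal V_0,\ldots,\mathcal V_n$ be complex vector spaces and $\mathcal V=\mathcal V_0\otimes\cdots\otimes\mathcal V_n$ (algebraic tensor product). Then every $v\in\mathcal V$ satisfies ${\rm rank}_\Omega(v)<\infty$, i.e. every $v\in\mathcal V$ admits an $\Omega$-decomposition.
   Context: $[n]=\{0,\ldots,n\}$. A weighted simplicial complex (wsc) on $[n]$ is a function $\Omega\colon\mathcal P([n])\to\mathbb N=\{0,1,\ldots\}$ such that $S_1\subseteq S_2$ implies $\Omega(S_1)\mid\Omega(S_2)$; simplices are sets with $\Omega(S)\ne0$, every singleton is assumed to be a simplex, and facets are inclusion-maximal simplices. $\widetilde{\mathcal F}$ is the multiset containing each facet $F$ exactly $\Omega(F)$ times, and for $i\in[n]$, $\widetilde{\mathcal F}_i\subseteq\widetilde{\mathcal F}$ is the sub-multiset of (copies of) facets containing $i$. Vertices $i,j$ are neighbours if some facet contains both; $\Omega$ is connected if any two vertices are joined by a finite chain of successive neighbours. For a finite set $\mathcal I$ and $\alpha\colon\widetilde{\mathcal F}\to\mathcal I$, write $\alpha_{\mid i}$ for the restriction of $\alpha$ to $\widetilde{\mathcal F}_i$. An $\Omega$-decomposition of $v\in\mathcal V$ consists of a finite set $\mathcal I$ and vectors $v^{[i]}_\beta\in\mathcal V_i$ for $i\in[n]$ and $\beta\in\mathcal I^{\widetilde{\mathcal F}_i}$ (functions $\widetilde{\mathcal F}_i\to\mathcal I$) such that $v=\sum_{\alpha\in\mathcal I^{\widetilde{\mathcal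 F}}}v^{[0]}_{\alpha_{\mid 0}}\otimes\cdots\otimes v^{[n]}_{\alpha_{\mid n}}$. ${\rm rank}_\Omega(v)$ is the smallest $|\mathcal I|$ over all $\Omega$-decompositions of $v$, and $\infty$ if none exists. *)

(* Defs.v *)
From HB Require Import structures.
From mathcomp Require Import all_boot all_order all_algebra.
From mathcomp Require Import complex.
From mathcomp Require Import Rstruct.
Set Implicit Arguments. Unset Strict Implicit. Unset Printing Implicit Defensive.
Import Order.TTheory GRing.Theory Num.Theory.
Local Open Scope ring_scope.

Definition CC : fieldType := complex Rdefinitions.R.

Definition is_wsc (n : nat) (Om : {set 'I_n.+1} -> nat) : Prop :=
  (forall S1 S2 : {set 'I_n.+1}, S1 \subset S2 -> (Om S1 %| Om S2)%N) /\
  (forall i : 'I_n.+1, Om [set i] != 0%N).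

Definition simplex (n : nat) (Om : {set 'I_n.+1} -> nat) (S : {set 'I_n.+1}) : bool :=
  Om S != 0%N.

Definition facet (n : nat) (Om : {set 'I_n.+1} -> nat) (F : {set 'I_n.+1}) : bool :=
  simplex Om F && [forall T : {set 'I_n.+1}, (F \proper T) ==> ~~ simplex Om T].

Definition neighbours (n : nat) (Om : {set 'I_n.+1} -> nat) : rel 'I_n.+1 :=
  fun i j => [exists F : {set 'I_n.+1}, [&& facet Om F, i \in F & j \in F]].

Definition wsc_connected (n : nat) (Om : {set 'I_n.+1} -> nat) : Prop :=
  forall i j : 'I_n.+1, connect (neighbours Om) i j.

(* The multiset \tilde F: copies (F, k) with F a facet and k < Om F. *)
Definition copies (n : nat) (Om : {set 'I_n.+1} -> nat) : finType :=
  {S : {set 'I_n.+1} & 'I_(Om S)}.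

Definition Ft (n : nat) (Om : {set 'I_n.+1} -> nat) : finType :=
  {p : copies Om | facet Om (tag p)}.

Definition Ft_facet (n : nat) (Om : {set 'I_n.+1} -> nat) (p : Ft Om) : {set 'I_n.+1} :=
  tag (val p).

Definition Fti (n : nat) (Om : {set 'I_n.+1} -> nat) (i : 'I_n.+1) : finType :=
  {p : Ft Om | i \in Ft_facet p}.

Definition restr (n : nat) (Om : {set 'I_n.+1} -> nat) (J : finType)
  (alpha : {ffun Ft Om -> J}) (i : 'I_n.+1) : {ffun Fti Om i -> J} :=
  [ffun q => alpha (val q)].

Definition multilinear (I : finType) (K : pzRingType) (V : I -> lmodType K)
  (W : lmodType K) (t : (forall i, V i) -> W) : Prop :=
  forall (x : forall i, V i) (i : I) (a : K) (y z : V i),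
    t (dfwith x (a *: y + z)) = a *: t (dfwith x y) + t (dfwith x z).

(* (W, t) is an algebraic tensor product of the V i: t is multilinear, W is
   spanned by the pure tensors, and every multilinear map factors linearly
   through t (together: the universal property of the tensor product). *)
Definition is_tensor_product (I : finType) (K : pzRingType) (V : I -> lmodType K)
  (W : lmodType K) (t : (forall i, V i) -> W) : Prop :=
  [/\ multilinear t,
      (forall w : W, exists (m : nat) (c : 'I_m -> K) (x : 'I_m -> forall i, V i),
          w = \sum_(k < m) c k *: t (x k))
    & (forall (U : lmodType K) (f : (forall i, V i) -> U), multilinear f ->
          exists g : W -> U, linear g /\ (forall x, f x = g (t x)))].

Definition Omega_decomposition (n : nat) (Om : {set 'I_n.+1} -> nat)
  (K : pzRingType) (V : 'I_n.+1 -> lmodType K) (W : lmodType K)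
  (t : (forall i, V i) -> W) (v : W) (r : nat)
  (vv : forall i : 'I_n.+1, {ffun Fti Om i -> 'I_r} -> V i) : Prop :=
  v = \sum_(alpha : {ffun Ft Om -> 'I_r}) t (fun i => vv i (restr alpha i)).

Definition has_Omega_decomposition (n : nat) (Om : {set 'I_n.+1} -> nat)
  (K : pzRingType) (V : 'I_n.+1 -> lmodType K) (W : lmodType K)
  (t : (forall i, V i) -> W) (v : W) : Prop :=
  exists (r : nat) (vv : forall i : 'I_n.+1, {ffun Fti Om i -> 'I_r} -> V i),
    Omega_decomposition t v vv.

(* Main.v *)
Require Import Defs.
From HB Require Import structures.
From mathcomp Require Import all_boot all_order all_algebra.
From Stdlib Require Import FunctionalExtensionality.
Set Implicit Arguments. Unset Strict Implicit. Unset Printing Implicit Defensive.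
Import Order.TTheory GRing.Theory Num.Theory.
Local Open Scope ring_scope.

Lemma dfwith_self (I : eqType) (T : I -> Type) (f : forall i, T i) i :
  dfwith f (f i) = f.
Proof. apply: functional_extensionality_dep => j; by case: dfwithP. Qed.

Section Aux.
Variables (n : nat) (Om : {set 'I_n.+1} -> nat).
Hypothesis wsc : is_wsc Om.

Lemma facet_n0 F : facet Om F -> F != set0.
Proof.
case/andP=> _ /forallP H; apply/eqP=> F0; subst F.
have /implyP := H [set ord0]; rewrite proper0 /simplex.
case: wsc => _ -> /= H1; have /H1 // : [set ord0] != set0 :> {set 'I_n.+1}.
by apply/set0Pn; exists ord0; rewrite set11.
Qed.

Lemma exists_facet (i : 'I_n.+1) : exists F, facet Om F && (i \in F).
Proof.
have Hi : (i \in [set i]) && simplex Om [set i] by rewrite set11 /simplex; case: wsc => _ ->.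
case: (@arg_maxnP _ [set i] (fun S => (i \in S) && simplex Om S) (fun S => #|S|) Hi) => F /andP[iF sF] Hmax.
exists F; rewrite iF andbT /facet sF /=; apply/forallP => T; apply/implyP => FT.
apply/negP=> sT; have := Hmax T; rewrite (subsetP (proper_sub FT)) // sT => /(_ isT).
by move=> /=; rewrite leqNgt proper_card.
Qed.

Definition mkFt F (HF : facet Om F) : Ft Om.
Proof.
refine (exist _ (existT (fun S => 'I_(Om S)) F (@Ordinal _ 0 _)) HF).
by case/andP: HF => /= H _; rewrite lt0n.
Defined.

Lemma Fti_inhabited (i : 'I_n.+1) : exists q : Fti Om i, true.
Proof.
case: (exists_facet i) => F /andP[HF iF].
by exists (exist _ (mkFt HF) iF).
Qed.

Lemma const_restr (J : finType) (alpha : {ffun Ft Om -> J}) :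
  wsc_connected Om ->
  (forall i, exists k, restr alpha i = [ffun=> k]) ->
  exists k, alpha = [ffun=> k].
Proof.
move=> conn H.
have [g Hg] : exists g : 'I_n.+1 -> J, forall i, restr alpha i = [ffun=> g i].
  exists (fun i => odflt (alpha (val (xchoose (Fti_inhabited i))))
                     [pick k | restr alpha i == [ffun=> k]]).
  move=> i; case: pickP => [k /eqP //|/= H0].
  by case: (H i) => k Hk; have := H0 k; rewrite Hk eqxx.
have Hv : forall i (q : Fti Om i), alpha (val q) = g i.
  by move=> i q; have /ffunP/(_ q) := Hg i; rewrite !ffunE.
have Hn : forall i j, neighbours Om i j -> g i = g j.
  move=> i j /existsP[F /and3P[HF iF jF]].
  by rewrite -(Hv i (exist _ (mkFt HF) iF)) -(Hv j (exist _ (mkFt HF) jF)).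
exists (g ord0); apply/ffunP => p; rewrite ffunE.
have /set0Pn[i iF] := facet_n0 (valP p).
rewrite (Hv i (exist _ p iF)).
have /connectP[s Hs ->] := conn ord0 i.
elim: s ord0 Hs => //= a s IH x /andP[xa Hs].
by rewrite (Hn _ _ xa) (IH _ Hs).
Qed.

End Aux.

Theorem theorem3p4 (n : nat) (Om : {set 'I_n.+1} -> nat)
  (V : 'I_n.+1 -> lmodType CC) (W : lmodType CC)
  (t : (forall i, V i) -> W) :
  is_wsc Om -> wsc_connected Om -> is_tensor_product t ->
  forall v : W, has_Omega_decomposition Om t v.
Proof.
move=> wsc conn [ml span _] v.
have t0 : forall x i, t (dfwith x (0 : V i)) = 0.
  move=> x i; have := ml x i 1 0 0; rewrite scaler0 addr0 scale1r => /eqP.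
  by rewrite -{1}[t _]addr0 eq_sym => /eqP /addrI.
have tZ : forall x i (a : CC), t (dfwith x (a *: x i)) = a *: t x.
  move=> x i a; have := ml x i a (x i) 0; rewrite addr0 t0 addr0 dfwith_self //.
have t0' : forall x i, x i = 0 -> t x = 0.
  by move=> x i xi; rewrite -(dfwith_self x i) xi t0.
case: (span v) => m [c [x ->]].
pose y k i := (if i == ord0 then c k else 1) *: x k i.
have ty : forall k, t (y k) = c k *: t (x k).
  move=> k; rewrite -(tZ _ ord0); congr t; apply: functional_extensionality_dep => j.
  rewrite /y; case: dfwithP => [|j' /negbTE]; first by rewrite eqxx.
  by rewrite eq_sym => ->; rewrite scale1r.
pose vv i (beta : {ffun Fti Om i -> 'I_m}) : V i :=
  if [pick k | beta == [ffun=> k]] is Some k then y k i else 0.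
exists m, vv; rewrite /Omega_decomposition.
pose G (alpha : {ffun Ft Om -> 'I_m}) := t (fun i => vv i (restr alpha i)).
have Gc : forall k, G [ffun=> k] = c k *: t (x k).
  move=> k; rewrite -ty /G; congr t; apply: functional_extensionality_dep => i.
  rewrite /vv; case: pickP => [k' /eqP Hk|H0].
    have [q _] := Fti_inhabited wsc i.
    by move/ffunP/(_ q): Hk; rewrite !ffunE => ->.
  by have := H0 k; rewrite /restr; move/negP; case; apply/eqP/ffunP => q; rewrite !ffunE.
have Gn : forall alpha, (forall k, alpha != [ffun=> k]) -> G alpha = 0.
  move=> alpha Ha.
  case: (boolP [forall i, [exists k, restr alpha i == [ffun=> k]]]) => [/forallP Hall|].
    have [k Hk] : exists k, alpha = [ffun=> k].
      by apply: (const_restr wsc conn) => i; have /existsP[k /eqP] := Hall i; exists k.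
    by have := Ha k; rewrite Hk eqxx.
  rewrite negb_forall => /existsP[i]; rewrite negb_exists => /forallP Hi.
  apply: (t0' _ i); rewrite /vv; case: pickP => // k Hk.
  by have := Hi k; rewrite Hk.
have Hinj : injective (fun k : 'I_m => [ffun=> k] : {ffun Ft Om -> 'I_m}).
  move=> k1 k2 /ffunP; have [q _] := Fti_inhabited wsc ord0.
  by move/(_ (val q)); rewrite !ffunE.
rewrite -/G.
transitivity (\sum_(k < m) G [ffun=> k]); first by apply: eq_bigr => k _; rewrite Gc.
rewrite (eq_bigr (fun k => \sum_alpha (if alpha == [ffun=> k] then G alpha else 0))); last first.
  by move=> k _; rewrite -big_mkcond /= (big_pred1 [ffun=> k]).
rewrite exchange_big /=; apply: eq_bigr => alpha _.
case: (boolP [exists k, alpha == [ffun=> k]]) => [/existsP[k0 /eqP ->]|].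
  rewrite -big_mkcond /= (big_pred1 k0) // => k /=.
  by rewrite (inj_eq Hinj) eq_sym.
rewrite negb_exists => /forallP Ha; rewrite big1; first by symmetry; exact: (Gn alpha Ha).
by move=> k _; rewrite (negbTE (Ha k)).
Qed.
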